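(* Let $\mathcal{T}=(V,A,E,f,q)$ be a decorated tree and let $e=\{v,\alpha\}$ be an edge with $v\in V$ and $\alpha\in A\setminus A_0$. If $N_v=0$, then $q(e,v)$ divides $f(\alpha)$.
   Context: A graph is a pair $(X_0,X_1)$ of finite sets such that each element of $X_1$ (an edge) is a $2$-element subset of $X_0$; elements of $X_0$ are cells. A path is a tuple $(x_0,\dots,x_n)$ ($n\ge0$) of cells with $\{x_i,x_{i+1}\}$ an edge for each $i<n$, these edges pairwise distinct; a cell/edge is in the path if it is some $x_i$ / some $\{x_i,x_{i+1}\}$. The graph is a tree if any two cells $x,y$ are joined by a unique path $\gamma_{x,y}$. A decorated tree is $(V,A,E,f,q)$ with $V$ (vertices), $A$ (arrows) finite disjoint sets, $(V\cup A,E)$ a tree, every arrow contained in exactly one edge, $f:A\to\mathbb{Z}$, $q(e,x)\in\mathbb{Z}$ for each $e\in E$, $x\in e$, with $q(e,\alpha)=1$ for $\alpha\in A$, and for each $v\in V$ and distinct edges $e,e'\ni v$, $\gcd(q(e,v),q(e',v))=1$. $A_0=\{\alpha\in A:f(\alpha)=0\}$. An edge $\varepsilon$ is incident to a path $\gamma$ if it is not in $\gamma$ but contains a cell $u$ of $\gamma$; $q(\varepsilon,\gamma):=q(\varepsilon,u)$. For $v\ne\alpha$, $v\in V\cup A$, $\alpha\in A$: $x_{v,\alpha}=f(\alpha)\prod_\varepsilon q(\varepsilon,\gamma_{v,\alpha})$ over edges incident to $\gamma_{v,\alpha}$ (empty product $=1$). For $v\in V\cup A_0$, $N_v=\sum_{\alpha\in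 A\setminus A_0}x_{v,\alpha}$. *)

(* Defs.v *)
From HB Require Import structures.
From mathcomp Require Import all_boot all_order all_algebra.
From Stdlib Require Import ClassicalEpsilon.
Set Implicit Arguments. Unset Strict Implicit. Unset Printing Implicit Defensive.
Import Order.TTheory GRing.Theory Num.Theory.
Local Open Scope ring_scope.

Section DecoratedTrees.
Variable T : finType.

(* A path (x_0,...,x_n) is represented by the nonempty sequence x_0 :: ... :: x_n. *)
Definition path_edges (p : seq T) : seq {set T} :=
  match p with
  | [::] => [::]
  | x :: s => pairmap (fun a b => [set a; b]) x s
  end.

Definition is_gpath (E : {set {set T}}) (p : seq T) : bool :=
  [&& p != [::], all (fun e => e \in E) (path_edges p) & uniq (path_edges p)].

Definition is_gpath_between (E : {set {set T}}) (x y : T) (p : seq T) : Prop :=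
  [/\ is_gpath E p, head x p = x & last x p = y].

Definition is_tree (E : {set {set T}}) : Prop :=
  (forall e, e \in E -> #|e| = 2%N) /\
  (forall x y : T, exists! p, is_gpath_between E x y p).

(* the (unique, in a tree) path gamma_{x,y} *)
Definition gamma (E : {set {set T}}) (x y : T) : seq T :=
  epsilon (inhabits [:: x]) (is_gpath_between E x y).

Definition decorated_tree (V A : {set T}) (E : {set {set T}})
    (f : T -> int) (q : {set T} -> T -> int) : Prop :=
  [/\ [disjoint V & A] /\ V :|: A = [set: T], is_tree E,
      (forall a, a \in A -> #|[set e in E | a \in e]| = 1%N),
      (forall e a, e \in E -> a \in A -> a \in e -> q e a = 1) &
      (forall v e e', v \in V -> e \in E -> e' \in E -> e != e' ->
          v \in e -> v \in e' -> coprimez (q e v) (q e' v))].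

Definition A0 (A : {set T}) (f : T -> int) : {set T} := [set a in A | f a == 0].

Definition incident (eps : {set T}) (g : seq T) : bool :=
  (eps \notin path_edges g) && [exists u in eps, u \in g].

Definition q_path (q : {set T} -> T -> int) (eps : {set T}) (g : seq T) : int :=
  match [pick u in eps | u \in g] with Some u => q eps u | None => 1 end.

Definition xva (E : {set {set T}}) (f : T -> int) (q : {set T} -> T -> int)
    (v a : T) : int :=
  f a * \prod_(eps in E | incident eps (gamma E v a)) q_path q eps (gamma E v a).

Definition Nv (A : {set T}) (E : {set {set T}}) (f : T -> int)
    (q : {set T} -> T -> int) (v : T) : int :=
  \sum_(a in A :\: A0 A f) xva E f q v a.

End DecoratedTrees.

(* Main.v *)
Require Import Defs.
From mathcomp Require Import all_boot all_order all_algebra.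
From Stdlib Require Import ClassicalEpsilon.
Import Order.TTheory GRing.Theory Num.Theory.
Local Open Scope ring_scope.

Section H.
Variable T : finType.
Implicit Types (E : {set {set T}}).

Lemma pe_mem (x : T) s e : e \in path_edges (x :: s) ->
  exists y z, e = [set y; z] /\ y \in x :: s /\ z \in x :: s.
Proof.
elim: s x => [|y s IH] x //=.
rewrite inE => /orP[/eqP->|H].
  by exists x, y; rewrite !inE !eqxx /= orbT.
have [y1 [z1 [-> [H1 H2]]]] := IH y H.
by exists y1, z1; split; [|split]; rewrite // inE ?H1 ?H2 orbT.
Qed.

Lemma gamma_spec E x y : is_tree E -> is_gpath_between E x y (gamma E x y).
Proof.
case=> _ /(_ x y) [p [Hp _]]; rewrite /gamma.
by apply: epsilon_spec; exists p.
Qed.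

Lemma uniq_edge E a e1 e2 : #|[set e in E | a \in e]| = 1%N ->
  e1 \in E -> a \in e1 -> e2 \in E -> a \in e2 -> e1 = e2.
Proof.
move=> /eqP/cards1P [e0 He] H1 H2 H3 H4.
have: e1 \in [set e in E | a \in e] by rewrite inE H1 H2.
have: e2 \in [set e in E | a \in e] by rewrite inE H3 H4.
by rewrite He !inE => /eqP -> /eqP ->.
Qed.

Lemma leaf_notin E a p v w : #|[set e in E | a \in e]| = 1%N ->
  is_gpath E p -> head v p = v -> last v p = w -> v != a -> w != a -> a \notin p.
Proof.
move=> Ha /and3P [Hne Hall Hu] Hh Hl Hva Hwa.
case: p Hne Hall Hu Hh Hl => // x s _ Hall Hu /= Hx Hl; subst x.
rewrite inE negb_or eq_sym Hva /=; apply/negP => Has.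
move: Hall Hu Hl; rewrite /path_edges.
case/splitPr: Has => s1 s2.
rewrite pairmap_cat /= last_cat /=.
case: s2 => [|b s2] /=.
  by move=> _ _ Hl; move: Hwa; rewrite Hl eqxx.
rewrite all_cat cat_uniq /= => /andP [_ /and3P [H1 H2 _]].
move=> /and3P [_ _ /andP [Hn _]] _.
move: Hn; rewrite inE negb_or => /andP [Hn _].
have Ea : [set last v s1; a] = [set a; b] by apply: (@uniq_edge E a _ _ Ha H1 _ H2); rewrite !inE eqxx ?orbT.
by rewrite Ea eqxx in Hn.
Qed.
End H.

Theorem lemma1p12 (T : finType) (V A : {set T}) (E : {set {set T}})
    (f : T -> int) (q : {set T} -> T -> int) :
  decorated_tree V A E f q ->
  forall v a : T, v \in V -> a \in A :\: A0 A f -> [set v; a] \in E ->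
  Nv A E f q v = 0 ->
  (q [set v; a] v %| f a)%Z.
Proof.
move=> [[Hdisj _] Htree Hleaf Hqa Hcop] v a Hv Ha He HN.
have Ha' : a \in A by move: Ha; rewrite inE => /andP [].
have Hva : v != a.
  apply/eqP => Eva; move/disjoint_setI0: Hdisj => /setP /(_ v).
  by rewrite inE Hv Eva Ha' inE.
set e := [set v; a] in He *.
have HaE := Hleaf a Ha'.
have Hae : a \in e by rewrite !inE eqxx orbT.
have Hve : v \in e by rewrite !inE eqxx.
have Hg : gamma E v a = [:: v; a].
  case: (Htree) => _ /(_ v a) [p [_ Hu]].
  rewrite -(Hu _ (@gamma_spec T E v a Htree)); apply: Hu.
  by split => //; rewrite /is_gpath /= He.
have Key : forall a', a' \in A :\: A0 A f -> a' != a -> (q e v %| xva E f q v a')%Z.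
  move=> a' Ha1 Hne; rewrite /xva.
  case: (@gamma_spec T E v a' Htree); move: (gamma E v a') => p Hp Hh Hl.
  have Hna : a \notin p := @leaf_notin T E a p v a' HaE Hp Hh Hl Hva Hne.
  have Hvp : v \in p.
    by case: p Hp Hh {Hl Hna} => [|x s] // _ /= ->; rewrite inE eqxx.
  have Hinc : incident e p.
    rewrite /incident; apply/andP; split; last by apply/existsP; exists v; rewrite Hve.
    apply/negP; case: p Hp Hh Hl Hna Hvp => [|x s] // _ _ _ Hna _.
    by move/pe_mem => [y [z [Ee [Hy Hz]]]]; move: Hae; rewrite Ee !inE => /orP [] /eqP Ey;
      move: Hna; rewrite Ey ?Hy ?Hz.
  rewrite (bigD1 e) /=; last by rewrite He Hinc.
  apply: dvdz_mull; apply: dvdz_mulr.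
  rewrite /q_path; case: pickP => [u /andP [Hu Hup] | H].
    by move: Hu; rewrite !inE => /orP [] /eqP Eu; [rewrite Eu | move: Hna; rewrite -Eu Hup].
  by move: (H v); rewrite Hve Hvp.
rewrite /Nv (bigD1 a) //= in HN.
have Hx : (q e v %| xva E f q v a)%Z.
  have -> : xva E f q v a = - \sum_(i in A :\: A0 A f | i != a) xva E f q v i.
    by apply/eqP; rewrite -subr_eq0 opprK HN.
  rewrite rpredN; apply: rpred_sum => i /andP [Hi Hne]; exact: Key.
move: Hx; rewrite /xva Hg Gauss_dvdzl //.
apply: (big_ind (fun x => coprimez (q e v) x)).
- by rewrite coprimezE coprimen1.
- by move=> x y Hx Hy; rewrite coprimezMr Hx Hy.
move=> eps /andP [HepsE Hinc].
have Hneq : eps != e.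
  by apply/eqP => Ee; move: Hinc; rewrite Ee /incident /= inE eqxx.
rewrite /q_path; case: pickP => [u /andP [Hu Hup] | _]; last by rewrite coprimezE coprimen1.
move: Hup; rewrite !inE => /orP [] /eqP Eu; subst u.
  by apply: Hcop => //; rewrite eq_sym.
by move: Hneq; rewrite (@uniq_edge T E a _ _ HaE HepsE Hu He Hae) eqxx.
Qed.
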